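(* Let $d=1$, $X\in\mathbb{R}$ with law $\mathbb{P}_X$, and let the missingness indicator $M\in\{0,1\}$ ($M=0$: observed) satisfy $\mathbb{P}[M=0\mid X]=\mathbb{1}(X\in\mathcal{I})$ for a measurable set $\mathcal{I}\subset\mathbb{R}$ (truncation mechanism); let $\varepsilon=\mathbb{P}[M=1]=\mathbb{P}[X\notin\mathcal{I}]<1$. Assume $\mathbb{P}_X=P_{\theta^*}$ for some $\theta^*\in\Theta$, and let $\theta_\infty^{\mathrm{MMD}}\in\arg\min_{\theta\in\Theta}\mathbb{E}_{M\sim\mathbb{P}_M}\big[\mathbb{D}^2(P_\theta^{(M)},\mathbb{P}_{X\mid M}^{(M)})\big]=\arg\min_{\theta\in\Theta}\mathbb{D}^2(P_\theta,\mathbb{P}_{X\mid M=0})$. Then $$ \mathbb{D}\big(P_{\theta_\infty^{\mathrm{MMD}}},P_{\theta^*}\big)\le 4\varepsilon. $$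
   Context: In expectations over $M$ the empty pattern $M=1$ is excluded, which gives the second expression for $\theta_\infty^{\mathrm{MMD}}$; $\mathbb{P}_{X\mid M=0}$ is the conditional law of $X$ given $M=0$. $\{P_\theta:\theta\in\Theta\}$ is a model on $\mathbb{R}$. $k$ is a positive definite kernel on $\mathbb{R}$ bounded by $1$ and characteristic, with RKHS $\mathcal{H}$, mean embedding $\Phi(Q)=\mathbb{E}_{Y\sim Q}[k(Y,\cdot)]$, MMD $\mathbb{D}(Q_1,Q_2)=\|\Phi(Q_1)-\Phi(Q_2)\|_{\mathcal{H}}$. *)

(* Defs.v *)
From HB Require Import structures.
From mathcomp Require Import all_boot all_order all_algebra.
From mathcomp Require Import all_classical all_reals all_analysis.
Set Implicit Arguments. Unset Strict Implicit. Unset Printing Implicit Defensive.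
Import Order.TTheory GRing.Theory Num.Theory.
Import numFieldNormedType.Exports.
Local Open Scope classical_set_scope.
Local Open Scope ring_scope.

Definition pos_def_kernel (R : realType) (k : R -> R -> R) : Prop :=
  (forall x y, k x y = k y x) /\
  (forall (n : nat) (x : 'I_n -> R) (c : 'I_n -> R),
      0 <= \sum_(i < n) \sum_(j < n) c i * c j * k (x i) (x j)).

Definition meas_kernel (R : realType) (k : R -> R -> R) : Prop :=
  measurable_fun [set: R * R] (fun z : R * R => k z.1 z.2).

(* <Phi(P), Phi(Q)>_H = E_{Y~P, Y'~Q} k(Y, Y') (reproducing property). *)
Definition kdot (R : realType) (k : R -> R -> R)
    (P Q : probability R R) : R :=
  fine (\int[P]_x (\int[Q]_y (k x y)%:E))%E.

(* MMD: D(P,Q) = || Phi(P) - Phi(Q) ||_H, written out via the inner products. *)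
Definition MMD (R : realType) (k : R -> R -> R) (P Q : probability R R) : R :=
  Num.sqrt (kdot k P P - 2 * kdot k P Q + kdot k Q Q).

Definition characteristic (R : realType) (k : R -> R -> R) : Prop :=
  forall P Q : probability R R, MMD k P Q = 0 ->
    forall A : set R, measurable A -> P A = Q A.

(* Main.v *)
Require Import Defs.
From HB Require Import structures.
From mathcomp Require Import all_boot all_order all_algebra.
From mathcomp Require Import all_classical all_reals all_analysis.
From mathcomp Require Import measurable_realfun.
Import Order.TTheory GRing.Theory Num.Theory.
Import numFieldNormedType.Exports.
Local Open Scope classical_set_scope.
Local Open Scope ring_scope.
Section Kern.
Context {R : realType}.
Notation Pr := (probability R R).

Definition bm (g : R -> R) :=
  measurable_fun setT g /\ exists M, forall x, `|g x| <= M.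

Definition E (P : Pr) (g : R -> R) := Rintegral P setT g.

Lemma bm_int (P : Pr) g : bm g -> P.-integrable setT (EFin \o g).
Proof.
move=> [mg [M hM]]; apply: measurable_bounded_integrable => //.
  exact: (le_lt_trans (probability_le1 _ measurableT) (ltry 1)).
exists M; split; [exact: num_real | move=> N MN x _ /=; exact: le_trans (hM _) (ltW MN)].
Qed.

Lemma bm_cst c : bm (fun _ => c).
Proof. by split; [exact: measurable_cst | exists `|c|]. Qed.

Lemma bm_add f g : bm f -> bm g -> bm (fun x => f x + g x).
Proof.
move=> [mf [M hM]] [mg [N hN]]; split; first exact: measurable_funD.
exists (M + N) => x; apply: le_trans (ler_normD _ _) _; exact: lerD.
Qed.

Lemma bm_scale c f : bm f -> bm (fun x => c * f x).
Proof.
move=> [mf [M hM]]; split.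
  by apply: (measurable_funM (f := fun _ => c)) => //; exact: measurable_cst.
exists (`|c| * M) => x; rewrite normrM; apply: ler_wpM2l => //.
Qed.

Lemma bm_mul f g : bm f -> bm g -> bm (fun x => f x * g x).
Proof.
move=> [mf [M hM]] [mg [N hN]]; split; first exact: measurable_funM.
exists (M * N) => x; rewrite normrM; apply: ler_pM => //.
Qed.

Lemma bm_sum (T : Type) (s : seq T) (F : T -> R -> R) :
  (forall i, bm (F i)) -> bm (fun x => \sum_(i <- s) F i x).
Proof.
move=> hF; elim: s => [|a s IH].
  by under eq_fun do rewrite big_nil; exact: bm_cst.
under eq_fun do rewrite big_cons; exact: bm_add.
Qed.

Lemma E_add P f g : bm f -> bm g ->
  E P (fun x => f x + g x) = E P f + E P g.
Proof. by move=> hf hg; rewrite /E RintegralD //; exact: bm_int. Qed.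

Lemma E_scale P c f : bm f -> E P (fun x => c * f x) = c * E P f.
Proof. by move=> hf; rewrite /E RintegralZl //; exact: bm_int. Qed.

Lemma E_cst P c : E P (fun _ => c) = c.
Proof. rewrite /E Rintegral_cst // -[RHS]mulr1; congr (_ * _); exact: (congr1 fine (probability_setT P)). Qed.

Lemma E_sum P (T : Type) (s : seq T) (F : T -> R -> R) :
  (forall i, bm (F i)) ->
  E P (fun x => \sum_(i <- s) F i x) = \sum_(i <- s) E P (F i).
Proof.
move=> hF; elim: s => [|a s IH].
  by under eq_fun do rewrite big_nil; rewrite big_nil E_cst.
under eq_fun do rewrite big_cons.
by rewrite E_add ?IH ?big_cons //; exact: bm_sum.
Qed.

Lemma E_ge0 P f : (forall x, 0 <= f x) -> 0 <= E P f.
Proof. by move=> h; apply: Rintegral_ge0. Qed.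

Lemma E_le P f g : bm f -> bm g -> (forall x, f x <= g x) -> E P f <= E P g.
Proof. by move=> hf hg h; apply: le_Rintegral => //; exact: bm_int. Qed.

Lemma E_norm P f c : bm f -> (forall x, `|f x| <= c) -> `|E P f| <= c.
Proof.
move=> hf h; apply: (le_trans (le_normr_Rintegral measurableT (bm_int P f hf))).
have hn : bm (fun x => `|f x|).
  case: hf => mf [M hM]; split; first exact: measurableT_comp.
  by exists M => x; rewrite normr_id.
rewrite -[X in _ <= X](E_cst P); apply: E_le => //; exact: bm_cst.
Qed.

Lemma E_fin P f : bm f -> (E P f)%:E = (\int[P]_x (f x)%:E)%E.
Proof.
by move=> hf; rewrite /E /Rintegral fineK //; apply: integrable_fin_num => //; exact: bm_int.
Qed.

Definition bm2 (f : R -> R -> R) :=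
  measurable_fun setT (fun z : R * R => f z.1 z.2) /\
  exists M, forall x y, `|f x y| <= M.

Lemma bm2_int (P Q : Pr) f : bm2 f ->
  (P \x Q)%E.-integrable setT (EFin \o (fun z : R * R => f z.1 z.2)).
Proof.
move=> [mf [M hM]]; apply: measurable_bounded_integrable => //.
  exact: (le_lt_trans (probability_le1 _ measurableT) (ltry 1)).
exists M; split; [exact: num_real | move=> N MN x _ /=; exact: le_trans (hM x.1 x.2) (ltW MN)].
Qed.

Lemma bm2_x f x : bm2 f -> bm (f x).
Proof.
move=> [mf [M hM]]; split; last by exists M.
exact: (measurable_fun_pair2 x mf).
Qed.

Lemma bm2_y f y : bm2 f -> bm (fun x => f x y).
Proof.
move=> [mf [M hM]]; split; last by exists M => x.
exact: (measurable_fun_pair1 y mf).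
Qed.

Lemma bm2_E (Q : Pr) f : bm2 f -> bm (fun x => E Q (f x)).
Proof.
move=> hf; split; last first.
  case: (hf) => _ [M hM]; exists M => x; apply: E_norm => //; exact: bm2_x.
apply/measurable_EFinP.
have -> : (EFin \o fun x => E Q (f x)) =
          fubini_F Q (EFin \o (fun z : R * R => f z.1 z.2)).
  by apply/funext => x /=; rewrite E_fin //; exact: bm2_x.
exact: (measurable_fubini_F (m1 := Q) (bm2_int Q Q f hf)).
Qed.

Lemma bm2_fubini (P Q : Pr) f : bm2 f ->
  E P (fun x => E Q (f x)) = E Q (fun y => E P (fun x => f x y)).
Proof.
move=> hf.
have b1 := bm2_E Q f hf.
have hf' : bm2 (fun y x => f x y).
  case: (hf) => mf [M hM]; split; last by exists M.
  exact: (measurableT_comp mf (measurable_fun_pair measurable_snd measurable_fst)).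
have b2 := bm2_E P _ hf'.
apply: EFin_inj; rewrite !E_fin //.
have := Fubini (bm2_int P Q f hf) => /= H.
transitivity (\int[P]_x \int[Q]_y (f x y)%:E)%E.
  by apply: eq_integral => x _; rewrite E_fin //; exact: bm2_x.
rewrite H; apply: eq_integral => y _; rewrite E_fin //; exact: bm2_y.
Qed.

End Kern.
From mathcomp Require Import ring lra.

Section PSD.
Context {R : realType}.
Variable k : R -> R -> R.
Hypothesis ksym : forall x y, k x y = k y x.
Hypothesis kpd : forall (n : nat) (x : 'I_n -> R) (c : 'I_n -> R),
      0 <= \sum_(i < n) \sum_(j < n) c i * c j * k (x i) (x j).
Hypothesis kmeas : meas_kernel k.
Hypothesis kbnd : forall x y, `|k x y| <= 1.
Notation Pr := (probability R R).

Lemma bm2k : bm2 k.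
Proof. by split; [exact: kmeas | exists 1 => x y; exact: kbnd]. Qed.

Definition h (P : Pr) x := E P (k x).
Definition Kd (P : Pr) := E P (fun x => k x x).
Definition KK (P Q : Pr) := E P (h Q).

Lemma bm_h P : bm (h P).
Proof. exact: (bm2_E P k bm2k). Qed.

Lemma bm_kx x : bm (k x).
Proof. exact: (bm2_x k x bm2k). Qed.

Lemma bm_ky y : bm (fun x => k x y).
Proof. exact: (bm2_y k y bm2k). Qed.

Lemma bm_kdiag : bm (fun x => k x x).
Proof.
split; last by exists 1.
have := measurableT_comp kmeas (measurable_fun_pair (@measurable_id _ R setT) (@measurable_id _ R setT)).
by apply.
Qed.

Lemma KK_sym P Q : KK P Q = KK Q P.
Proof.
rewrite /KK /h (bm2_fubini P Q k bm2k); congr (E Q _); apply/funext => y.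
by congr (E P _); apply/funext => x; rewrite ksym.
Qed.

Definition Fs (ys : seq (R * R)) :=
  \sum_(u <- ys) \sum_(v <- ys) u.1 * v.1 * k u.2 v.2.
Definition G (ms : seq (R * Pr)) y := \sum_(m <- ms) m.1 * h m.2 y.
Definition Qs (ms : seq (R * Pr)) :=
  \sum_(m <- ms) \sum_(m' <- ms) m.1 * m'.1 * KK m.2 m'.2 +
  \sum_(m <- ms) m.1 ^+ 2 * (Kd m.2 - KK m.2 m.2).
Definition Ex ms ys := Fs ys + 2 * \sum_(u <- ys) u.1 * G ms u.2 + Qs ms.

Lemma Fs_cons a x ys : Fs ((a, x) :: ys) =
  a * a * k x x + 2 * a * (\sum_(u <- ys) u.1 * k u.2 x) + Fs ys.
Proof.
rewrite /Fs big_cons big_cons /=.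
under [X in _ + X = _]eq_bigr => u _ do rewrite big_cons /=.
rewrite big_split /=.
have E1 : \sum_(v <- ys) a * v.1 * k x v.2 = a * \sum_(u <- ys) u.1 * k u.2 x.
  by rewrite mulr_sumr; apply: eq_bigr => u _; rewrite ksym mulrA.
have E2 : \sum_(u <- ys) u.1 * a * k u.2 x = a * \sum_(u <- ys) u.1 * k u.2 x.
  by rewrite mulr_sumr; apply: eq_bigr => u _; rewrite (mulrC u.1) mulrA.
rewrite E1 E2; ring.
Qed.

Lemma Qs_cons a P ms : Qs ((a, P) :: ms) =
  a ^+ 2 * Kd P + 2 * a * (\sum_(m <- ms) m.1 * KK P m.2) + Qs ms.
Proof.
rewrite /Qs !big_cons /=.
under [X in _ + X + _ = _]eq_bigr => u _ do rewrite big_cons /=.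
rewrite big_split /=.
have E1 : \sum_(v <- ms) a * v.1 * KK P v.2 = a * \sum_(u <- ms) u.1 * KK P u.2.
  by rewrite mulr_sumr; apply: eq_bigr => u _; rewrite mulrA.
have E2 : \sum_(u <- ms) u.1 * a * KK u.2 P = a * \sum_(u <- ms) u.1 * KK P u.2.
  by rewrite mulr_sumr; apply: eq_bigr => u _; rewrite KK_sym (mulrC u.1) mulrA.
rewrite E1 E2; ring.
Qed.

Lemma Fs_ge0 ys : 0 <= Fs ys.
Proof.
have := kpd (size ys) (fun i : 'I_(size ys) => (nth (0, 0) ys i).2)
            (fun i : 'I_(size ys) => (nth (0, 0) ys i).1).
rewrite /Fs (big_nth (0, 0)) big_mkord.
congr (0 <= _); apply: eq_bigr => i _.
by rewrite (big_nth (0, 0)) big_mkord.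
Qed.

Lemma bm_S1 (ys : seq (R * R)) : bm (fun x => \sum_(u <- ys) u.1 * k u.2 x).
Proof. by apply: bm_sum => u; apply: bm_scale; exact: bm_kx. Qed.

Lemma bm_G ms : bm (G ms).
Proof. by apply: bm_sum => u; apply: bm_scale; exact: bm_h. Qed.

Lemma Ex_ge0 ms : forall ys, 0 <= Ex ms ys.
Proof.
elim: ms => [|[a P] ms IH] ys.
  rewrite /Ex /Qs /G !big_nil.
  under eq_bigr do rewrite big_nil mulr0.
  by rewrite big1_eq mulr0 !addr0; exact: Fs_ge0.
set S1 := fun x => \sum_(u <- ys) u.1 * k u.2 x.
set C1 := \sum_(u <- ys) u.1 * G ms u.2.
set Cst := Fs ys + 2 * C1 + Qs ms.
have step : (fun x => Ex ms ((a, x) :: ys)) =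
  (fun x => (a * a * k x x + (2 * a) * S1 x) + ((2 * a) * G ms x + Cst)).
  apply/funext => x; rewrite /Ex Fs_cons big_cons /= /Cst /C1 /S1; ring.
have HE : E P (fun x => Ex ms ((a, x) :: ys)) = Ex ((a, P) :: ms) ys.
  rewrite step E_add; last 2 first.
  - by apply: bm_add; apply: bm_scale; [exact: bm_kdiag | exact: bm_S1].
  - by apply: bm_add; [apply: bm_scale; exact: bm_G | exact: bm_cst].
  rewrite E_add; last 2 first.
  - by apply: bm_scale; exact: bm_kdiag.
  - by apply: bm_scale; exact: bm_S1.
  rewrite E_add; last 2 first.
  - by apply: bm_scale; exact: bm_G.
  - exact: bm_cst.
  rewrite E_cst E_scale; last exact: bm_kdiag.
  rewrite E_scale; last exact: bm_S1.
  rewrite E_scale; last exact: bm_G.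
  have ES1 : E P S1 = \sum_(u <- ys) u.1 * h P u.2.
    rewrite /S1 (E_sum P _ ys (fun u x => u.1 * k u.2 x)); last first.
      by move=> u; apply: bm_scale; exact: bm_kx.
    by apply: eq_bigr => u _; rewrite E_scale //; exact: bm_kx.
  have EG : E P (G ms) = \sum_(m <- ms) m.1 * KK P m.2.
    rewrite /G (E_sum P _ ms (fun m x => m.1 * h m.2 x)); last first.
      by move=> u; apply: bm_scale; exact: bm_h.
    by apply: eq_bigr => u _; rewrite E_scale //; exact: bm_h.
  rewrite ES1 EG /Ex Qs_cons /Cst /C1 /G.
  under [X in _ = _ + 2 * X + _]eq_bigr => u _ do rewrite big_cons /= mulrDr mulrCA.
  rewrite big_split /= -mulr_sumr /Kd; ring.
rewrite -HE; apply: E_ge0 => x; exact: IH.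
Qed.

Lemma sum_rep (T : Type) (bs : seq T) (f : T -> R) N :
  \sum_(m <- flatten (nseq N bs)) f m = N%:R * \sum_(m <- bs) f m.
Proof.
elim: N => [|N IH]; first by rewrite big_nil mul0r.
rewrite (_ : flatten (nseq N.+1 bs) = bs ++ flatten (nseq N bs)) //.
by rewrite big_cat IH -addn1 natrD mulrDl mul1r addrC.
Qed.

Lemma psd (bs : seq (R * Pr)) :
  0 <= \sum_(m <- bs) \sum_(m' <- bs) m.1 * m'.1 * KK m.2 m'.2.
Proof.
set S := \sum_(m <- bs) _.
set D := \sum_(m <- bs) m.1 ^+ 2 * (Kd m.2 - KK m.2 m.2).
have HN : forall N : nat, 0 <= N%:R * (N%:R * S) + N%:R * D.
  move=> N; have := Ex_ge0 (flatten (nseq N bs)) [::].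
  rewrite /Ex /Fs /Qs !big_nil mulr0 !add0r !sum_rep.
  under eq_bigr do rewrite sum_rep.
  rewrite -mulr_sumr; by apply.
rewrite leNgt; apply/negP => S0.
pose N := (Num.truncn (`|D| / (- S))).+1.
have hN := truncnS_gt (`|D| / (- S)).
have NS : `|D| < N%:R * (- S).
  by rewrite -ltr_pdivrMr ?oppr_gt0 // mulrC.
have h1 := ler_norm D.
have H1 : N%:R * S + D < 0 by move: NS; rewrite mulrN; lra.
have N0 : 0 < N%:R :> R by rewrite ltr0n.
have := HN N; rewrite -mulrDr pmulr_rge0 // leNgt H1.
by [].
Qed.

End PSD.
Lemma tri_real (R : realType) (qa qb w : R) : 0 <= qa -> 0 <= qb ->
  (forall t, 0 <= t ^+ 2 * qa + 2 * t * w + qb) ->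
  Num.sqrt (qa + 2 * w + qb) <= Num.sqrt qa + Num.sqrt qb.
Proof.
move=> qa0 qb0 H.
set s := Num.sqrt qa; set r := Num.sqrt qb.
have s0 : 0 <= s by exact: sqrtr_ge0.
have r0 : 0 <= r by exact: sqrtr_ge0.
have hs : s ^+ 2 = qa by exact: sqr_sqrtr.
have hr : r ^+ 2 = qb by exact: sqr_sqrtr.
have Hw : w <= s * r.
  have [w0|w0] := leP w 0; first by apply: le_trans w0 _; exact: mulr_ge0.
  have [s_0|sn0] := eqVneq s 0.
    have := H (- (r ^+ 2 + 1) / (2 * w)).
    rewrite -hs -hr s_0 (expr2 0) !mulr0 add0r.
    have -> : 2 * (- (r ^+ 2 + 1) / (2 * w)) * w = - (r ^+ 2 + 1).
      by field; rewrite gt_eqF.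
    lra.
  have sp : 0 < s by rewrite lt_def sn0 s0.
  have := H (- w / (s ^+ 2)).
  rewrite -hs -hr.
  have -> : (- w / s ^+ 2) ^+ 2 * s ^+ 2 + 2 * (- w / s ^+ 2) * w + r ^+ 2
            = r ^+ 2 - w ^+ 2 / s ^+ 2.
    by field.
  rewrite subr_ge0 ler_pdivrMr ?exprn_gt0 // => h2.
  rewrite -ler_sqr ?nnegrE ?(ltW w0) ?mulr_ge0 //.
  by rewrite exprMn mulrC.
have -> : qa + 2 * w + qb = (s + r) ^+ 2 - 2 * (s * r - w).
  by rewrite -hs -hr; ring.
have hle : (s + r) ^+ 2 - 2 * (s * r - w) <= (s + r) ^+ 2 by lra.
apply: le_trans (ler_wsqrtr hle) _.
by rewrite sqrtr_sqr ger0_norm // addr_ge0.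
Qed.
Section Trunc.
Context {R : realType}.
Variable k : R -> R -> R.
Hypothesis ksym : forall x y, k x y = k y x.
Hypothesis kmeas : meas_kernel k.
Hypothesis kbnd : forall x y, `|k x y| <= 1.
Variables (C B : probability R R) (I : set R).
Hypothesis mI : measurable I.
Hypothesis hB : forall A : set R, measurable A -> (B A * C I = C (A `&` I))%E.
Hypothesis eps_lt1 : fine (C (~` I)) < 1.

Let p := fine (C I).
Let eps := fine (C (~` I)).

Let CI : C I = p%:E.
Proof. by rewrite /p fineK //; exact: fin_num_measure. Qed.

Let CnI : C (~` I) = eps%:E.
Proof. by rewrite /eps fineK //; apply: fin_num_measure; exact: measurableC. Qed.

Let peps : p = 1 - eps.
Proof.
have := probability_setC C mI; rewrite CnI CI => /(congr1 fine) /= ->; ring.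
Qed.

Let eps_ge0 : 0 <= eps.
Proof. by rewrite /eps fine_ge0 // measure_ge0. Qed.

Let p_gt0 : 0 < p.
Proof. rewrite peps; move: eps_lt1; rewrite -/eps; lra. Qed.

Let BnI : B (~` I) = 0%E.
Proof.
have := hB _ (measurableC mI); rewrite setICl measure0 CI => /eqP.
rewrite mule_eq0 => /orP[/eqP //|]; rewrite eqe => /eqP p0.
by move: p_gt0; rewrite p0 ltxx.
Qed.

Lemma bm_indic (A : set R) : measurable A -> bm (\1_A : R -> R).
Proof.
move=> mA; split; first exact: measurable_indic.
by exists 1 => x; rewrite indicE; case: (x \in A); rewrite ?normr1 ?normr0.
Qed.

Let trans_ge0 g : bm g -> (forall x, 0 <= g x) ->
  (\int[C]_(x in I) (g x)%:E = p%:E * \int[B]_x (g x)%:E)%E.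
Proof.
move=> hg g0.
pose pp : {nonneg R} := NngNum (ltW p_gt0).
rewrite (eq_measure_integral (mscale pp B)); last first.
  move=> A mA AI; rewrite /mscale /=.
  by have := hB _ mA; rewrite (setIidl AI) CI muleC => <-.
rewrite ge0_integral_mscale //; last 2 first.
- by apply: measurable_funTS; apply/measurable_EFinP; case: hg.
- by move=> x _; rewrite lee_fin.
congr (_ * _)%E.
rewrite [in RHS](negligible_integral (measurableC mI) measurableT) //; last first.
  exact: bm_int.
by rewrite setTD setCK.
Qed.

Lemma trans_R g : bm g -> Rintegral C I g = p * E B g.
Proof.
move=> hg; have hg' := hg; case: hg' => mg [M hM].
set g' := fun x => g x + M.
have bg' : bm g' by apply: bm_add => //; exact: bm_cst.
have g'0 : forall x, 0 <= g' x.
  move=> x; rewrite /g'; have := hM x; rewrite ler_norml => /andP[h1 _]; lra.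
have e1 : Rintegral C I g' = p * E B g'.
  by rewrite /Rintegral trans_ge0 // -E_fin.
have intI : forall f, bm f -> C.-integrable I (EFin \o f).
  by move=> f hf; apply: (integrableS measurableT mI) => //; exact: bm_int.
have e2 : Rintegral C I g' = Rintegral C I g + M * p.
  rewrite /g' RintegralD //; last 2 first.
  - exact: intI.
  - by apply: intI; exact: bm_cst.
  by rewrite Rintegral_cst // CI.
have e3 : E B g' = E B g + M.
  by rewrite /g' E_add ?E_cst //; exact: bm_cst.
move: e1; rewrite e2 e3 mulrDr (mulrC M); lra.
Qed.

Definition rI g := E C (fun y => \1_(~` I) y * g y).

Lemma trans g : bm g -> E C g = p * E B g + rI g.
Proof.
move=> hg.
have -> : g = (fun y => \1_I y * g y + \1_(~` I) y * g y).
  apply/funext => y; rewrite !indicE in_setC.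
  by case: (y \in I) => /=; rewrite ?mul1r ?mul0r ?addr0 ?add0r.
rewrite E_add; last 2 first.
- by apply: bm_mul => //; exact: bm_indic.
- by apply: bm_mul => //; apply: bm_indic; exact: measurableC.
congr (_ + _); last first.
  rewrite /rI; congr (E C _); apply/funext => y.
  rewrite !indicE in_setC.
  by case: (y \in I) => /=; rewrite ?mul1r ?mul0r ?addr0 ?add0r.
have -> : E C (fun y => \1_I y * g y) = Rintegral C I g.
  rewrite Rintegral_mkcond /E; congr Rintegral; apply/funext => y.
  by rewrite /patch indicE; case: (y \in I); rewrite ?mul1r ?mul0r.
rewrite trans_R //; congr (_ * E B _); apply/funext => y.
rewrite !indicE in_setC.
by case: (y \in I) => /=; rewrite ?mul1r ?mul0r ?addr0 ?add0r.
Qed.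

Lemma rI_bound g M : bm g -> (forall x, `|g x| <= M) -> `|rI g| <= M * eps.
Proof.
move=> hg hM.
have hf : bm (fun y => \1_(~` I) y * g y).
  by apply: bm_mul => //; apply: bm_indic; exact: measurableC.
apply: (le_trans (le_normr_Rintegral measurableT (bm_int C _ hf))).
have hi : bm (\1_(~` I) : R -> R) by apply: bm_indic; exact: measurableC.
have habs : bm (fun y => `|\1_(~` I) y * g y|).
  case: (hf) => mf [N hN]; split; first exact: measurableT_comp.
  by exists N => x; rewrite normr_id.
have -> : M * eps = E C (fun y => M * \1_(~` I) y).
  rewrite E_scale //; congr (_ * _).
  by rewrite /E /Rintegral integral_indic ?setIT ?CnI //; exact: measurableC.
apply: (E_le C _ _ habs); first by apply: bm_scale.
move=> x; rewrite normrM indicE; case: (x \in ~` I); rewrite ?normr1 ?normr0 ?mul1r ?mul0r ?mulr1 ?mulr0 //.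
Qed.

Lemma DCB : KK k C C - 2 * KK k C B + KK k B B <= 4 * eps ^+ 2.
Proof.
pose f2 := fun x y => \1_(~` I) y * k x y.
have bf2 : bm2 f2.
  split; last first.
    exists 1 => x y; rewrite /f2 normrM indicE.
    by case: (y \in ~` I); rewrite ?normr1 ?normr0 ?mul1r ?mul0r // kbnd.
  apply: (measurable_funM (f := fun z : R * R => \1_(~` I) z.2)) => //.
  apply: measurableT_comp measurable_snd; apply: measurable_indic.
  exact: measurableC.
set hv := fun x => rI (k x).
have bhv : bm hv by exact: (bm2_E C f2 bf2).
have e1 : forall x, h k C x = p * h k B x + hv x.
  by move=> x; rewrite /h trans //; exact: (bm_kx k kmeas kbnd).
have bh := bm_h k kmeas kbnd.
set A := rI (h k B).
have e3 : E C (h k B) = p * KK k B B + A by rewrite trans.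
have e4 : E C hv = p * E B hv + rI hv by rewrite trans.
have e5 : E B hv = A.
  rewrite /hv /rI (bm2_fubini B C f2 bf2) /A /rI; congr (E C _); apply/funext => y.
  rewrite /f2 E_scale; last exact: (bm_ky k kmeas kbnd).
  by congr (_ * E B _); apply/funext => x; rewrite ksym.
have eCC : KK k C C = p * E C (h k B) + E C hv.
  rewrite /KK (_ : h k C = (fun x => p * h k B x + hv x)); last by apply/funext => x; exact: e1.
  by rewrite E_add ?E_scale //; exact: bm_scale.
have eCB : KK k C B = E C (h k B) by [].
have hb1 : forall x, `|h k B x| <= 1.
  move=> x; apply: E_norm => //; exact: (bm_kx k kmeas kbnd).
have b1 : `|KK k B B| <= 1 by apply: E_norm.
have b2 : `|A| <= 1 * eps by apply: rI_bound.
have hvb : forall x, `|hv x| <= 1 * eps.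
  by move=> x; apply: rI_bound => //; exact: (bm_kx k kmeas kbnd).
have b3 : `|rI hv| <= (1 * eps) * eps by apply: rI_bound.
rewrite eCC eCB e4 e5 e3 peps.
move: b1 b2 b3; rewrite !mul1r !ler_norml => /andP[b1 b1'] /andP[b2 b2'] /andP[b3 b3'].
have q1 : 0 <= eps ^+ 2 * (1 - KK k B B) by apply: mulr_ge0; [exact: sqr_ge0 | lra].
have q2 : 0 <= eps * (A + eps) by apply: mulr_ge0 => //; lra.
nra.
Qed.

End Trunc.
Lemma kdot_KK (R : realType) (k : R -> R -> R) (kmeas : meas_kernel k)
  (kbnd : forall x y, `|k x y| <= 1) (P Q : probability R R) :
  kdot k P Q = KK k P Q.
Proof.
rewrite /kdot /KK /E /Rintegral; congr fine; apply: eq_integral => x _.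
by rewrite /h E_fin //; exact: (bm_kx k kmeas kbnd).
Qed.

Theorem corollary1 (R : realType) (k : R -> R -> R)
    (k_pd : pos_def_kernel k) (k_meas : meas_kernel k)
    (k_bnd : forall x y, `|k x y| <= 1) (k_char : characteristic k)
    (Theta : Type) (Pth : Theta -> probability R R) (theta_star : Theta)
    (I : set R) (mI : measurable I)
    (eps_lt1 : fine (Pth theta_star (~` I)) < 1)
    (PXM0 : probability R R)
    (PXM0_def : forall A : set R, measurable A ->
        (PXM0 A * Pth theta_star I = Pth theta_star (A `&` I))%E)
    (theta_inf : Theta)
    (theta_inf_argmin : forall theta : Theta,
        MMD k (Pth theta_inf) PXM0 ^+ 2 <= MMD k (Pth theta) PXM0 ^+ 2) :
  MMD k (Pth theta_inf) (Pth theta_star) <= 4 * fine (Pth theta_star (~` I)).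
Proof.
case: k_pd => ksym kpd.
have hmin := theta_inf_argmin theta_star.
have hD := DCB k ksym k_meas k_bnd (Pth theta_star) PXM0 I mI PXM0_def eps_lt1.
move: hmin hD; rewrite /MMD !kdot_KK //.
set A := Pth theta_inf; set C := Pth theta_star; set B := PXM0.
set eps := fine (C (~` I)).
have eps0 : 0 <= eps by rewrite /eps fine_ge0 // measure_ge0.
have hsym := KK_sym k ksym k_meas k_bnd.
have H3 : forall a b c : R, 0 <= a * a * KK k A A + b * b * KK k B B + c * c * KK k C C
    + 2 * a * b * KK k A B + 2 * a * c * KK k A C + 2 * b * c * KK k B C.
  move=> a b c; have := psd k ksym kpd k_meas k_bnd [:: (a, A); (b, B); (c, C)].
  rewrite !big_cons !big_nil /= (hsym B A) (hsym C A) (hsym C B).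
  move=> H; apply: (le_trans H); rewrite le_eqVlt; apply/orP; left; apply/eqP; ring.
rewrite (hsym C B) => hmin hD.
set qa := KK k A A - 2 * KK k A B + KK k B B.
set qb := KK k B B - 2 * KK k B C + KK k C C.
have qa0 : 0 <= qa by have := H3 1 (-1) 0; rewrite /qa; lra.
have qb0 : 0 <= qb by have := H3 0 1 (-1); rewrite /qb; lra.
set w := KK k A B - KK k A C - KK k B B + KK k B C.
have Ht : forall t, 0 <= t ^+ 2 * qa + 2 * t * w + qb.
  move=> t; have := H3 t (1 - t) (-1).
  have -> : t ^+ 2 * qa + 2 * t * w + qb =
    t * t * KK k A A + (1 - t) * (1 - t) * KK k B B + -1 * -1 * KK k C C +
    2 * t * (1 - t) * KK k A B + 2 * t * -1 * KK k A C +
    2 * (1 - t) * -1 * KK k B C by rewrite /qa /qb /w; ring.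
  by [].
have htri := tri_real _ _ _ _ qa0 qb0 Ht.
have -> : KK k A A - 2 * KK k A C + KK k C C = qa + 2 * w + qb.
  by rewrite /qa /qb /w; ring.
apply: (le_trans htri).
have qCB : KK k C C - 2 * KK k B C + KK k B B = qb by rewrite /qb; ring.
have hqa : qa <= qb.
  have e1 : Num.sqrt qa ^+ 2 = qa := sqr_sqrtr qa0.
  have e2 : Num.sqrt qb ^+ 2 = qb := sqr_sqrtr qb0.
  move: hmin; rewrite qCB.
  change (Num.sqrt qa ^+ 2 <= Num.sqrt qb ^+ 2 -> qa <= qb).
  by rewrite e1 e2.
rewrite qCB in hD.
have sb : Num.sqrt qb <= 2 * eps.
  have -> : 2 * eps = Num.sqrt ((2 * eps) ^+ 2).
    by rewrite sqrtr_sqr ger0_norm // mulr_ge0.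
  by apply: ler_wsqrtr; rewrite exprMn; lra.
have sa : Num.sqrt qa <= Num.sqrt qb by apply: ler_wsqrtr.
lra.
Qed.
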